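(* Let $n\ge 1$ and let $J\subseteq[n]$ be a $k$-element subset. Let $\pi,\hat\pi\in S_J$. Then the points $(\pi(1),\dots,\pi(n))$ and $(\hat\pi(1),\dots,\hat\pi(n))$ are joined by an edge of the bridge polytope $\mathrm{Br}_J$ if and only if there exist $i<\ell$ in $[n]$ such that $\hat\pi=(i\,\ell)\pi$ and $\pi(j)=\hat\pi(j)=j$ for every $j$ with $i<j<\ell$. In other words, $\pi$ and $\hat\pi$ differ by swapping the values $i$ and $\ell$, and each of $i+1,\dots,\ell-1$ is a fixed point of both $\pi$ and $\hat\pi$.
   Context: For $J\subseteq[n]=\{1,\dots,n\}$, let $S_J=\{\pi\in S_n:\ \pi(j)\ge j \text{ for all } j\in J,\ \pi(j)\le j \text{ for all } j\notin J\}$. The bridge polytope is $\mathrm{Br}_J=\operatorname{conv}\{(\pi(1),\dots,\pi(n)) : \pi\in S_J\}\subset\mathbb{R}^n$; each $\pi\in S_J$ is identified with the point $(\pi(1),\dots,\pi(n))$, and these points are the vertices of $\mathrm{Br}_J$. For a transposition $(i\,\ell)$ and $\pi\in S_n$, $(i\,\ell)\pi$ denotes the composition $(i\,\ell)\circ\pi$, i.e. the permutation obtained from $\pi$ by swapping the values $i$ and $\ell$. *)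

(* Defs.v *)
From HB Require Import structures.
From mathcomp Require Import all_boot all_order all_algebra all_fingroup.
Set Implicit Arguments. Unset Strict Implicit. Unset Printing Implicit Defensive.
Import Order.TTheory GRing.Theory Num.Theory.

(* Convention: [n] = {1,...,n} is represented by 'I_n = {0,...,n-1};
   the element j : 'I_n stands for j+1.  Permutations of [n] are 'S_n. *)

(* S_J : pi(j) >= j for j in J, pi(j) <= j for j not in J
   (invariant under the shift by 1). *)
Definition S_J (n : nat) (J : {set 'I_n}) : pred 'S_n :=
  fun p => [forall j : 'I_n, if j \in J then (val j <= val (p j))%N
                                  else (val (p j) <= val j)%N].

Definition perm_point (R : realFieldType) (n : nat) (p : 'S_n) : 'I_n -> R :=
  fun j => (((val (p j)).+1)%:R)%R.

Definition lin_eval (R : realFieldType) (n : nat) (c x : 'I_n -> R) : R :=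
  (\sum_(j < n) c j * x j)%R.

(* Two vertices u = pt p, v = pt q of P = conv { pt w | w in V } are joined
   by an edge of P iff they are distinct and some linear functional c
   attains its maximum over P exactly on the segment [u,v], i.e. the set of
   vertices maximizing c is exactly {u, v} (the face cut out by c is then
   conv{u,v}, a 1-dimensional face). *)
Definition conv_edge (R : realFieldType) (n : nat) (V : pred 'S_n)
    (pt : 'S_n -> 'I_n -> R) (p q : 'S_n) : Prop :=
  [/\ V p, V q, pt p <> pt q &
   exists c : 'I_n -> R,
     forall w, V w ->
       (lin_eval c (pt w) <= lin_eval c (pt p))%R /\
       (lin_eval c (pt w) = lin_eval c (pt p) <-> (pt w = pt p \/ pt w = pt q))].

Definition bridge_edge (R : realFieldType) (n : nat) (J : {set 'I_n})
    (p q : 'S_n) : Prop :=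
  conv_edge (S_J J) (@perm_point R n) p q.

(* Main.v *)
Require Import Defs.
From HB Require Import structures.
From mathcomp Require Import all_boot all_order all_algebra all_fingroup.
From mathcomp Require Import zify ring lra.
Set Implicit Arguments. Unset Strict Implicit. Unset Printing Implicit Defensive.
Import Order.TTheory GRing.Theory Num.Theory.

Lemma SJ_U n (J : {set 'I_n}) (w : 'S_n) j :
  S_J J w -> j \in J -> (j <= w j)%N.
Proof. by move=> /forallP/(_ j); case: ifP. Qed.

Lemma SJ_D n (J : {set 'I_n}) (w : 'S_n) j :
  S_J J w -> j \notin J -> (w j <= j)%N.
Proof. by move=> /forallP/(_ j); case: ifP => // ->. Qed.

Lemma swap_SJ n (J : {set 'I_n}) (w : 'S_n) (a b : 'I_n) :
  S_J J w -> (a < b)%N -> (forall v : 'I_n, (a < v < b)%N -> w v = v) ->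
  ~ (w a = a /\ a \notin J) -> ~ (w b = b /\ b \in J) ->
  S_J J (w * tperm a b)%g.
Proof.
move=> hw ab hmid ha hb; apply/forallP => j /=; rewrite permM.
case: tpermP => [wja|wjb|na nb].
- case: ifP => jJ.
  + by have := SJ_U hw jJ; rewrite wja => ja; lia.
  + have := SJ_D hw (negbT jJ); rewrite wja => aj.
    rewrite leqNgt; apply/negP => jb.
    case: (ltngtP a j) => [aj'|ja'|ajeq].
    * have := hmid j; rewrite aj' jb => /(_ isT) wjj.
      by move: aj'; rewrite -wja wjj ltnn.
    * lia.
    * have ajE : a = j by apply: val_inj.
      subst j; by apply: ha; rewrite wja jJ.
- case: ifP => jJ.
  + have := SJ_U hw jJ; rewrite wjb => jb.
    rewrite leqNgt; apply/negP => aj.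
    case: (ltngtP j b) => [jb'|bj'|jbeq].
    * have := hmid j; rewrite aj jb' => /(_ isT) wjj.
      by move: jb'; rewrite -wjb wjj ltnn.
    * lia.
    * have bjE : b = j by apply: val_inj.
      subst j; by apply: hb; rewrite wjb jJ.
  + by have := SJ_D hw (negbT jJ); rewrite wjb => bj; lia.
- by have := forallP hw j.
Qed.

Local Open Scope ring_scope.

Lemma lin_swap (R : realFieldType) n (c : 'I_n -> R) (w : 'S_n) (a b : 'I_n) :
  a != b ->
  lin_eval c (perm_point R (w * tperm a b)%g) - lin_eval c (perm_point R w)
  = (c ((w^-1)%g a) - c ((w^-1)%g b)) * ((b : nat)%:R - (a : nat)%:R).
Proof.
move=> ab; rewrite /lin_eval /perm_point -sumrB.
have ba : (w^-1)%g b != (w^-1)%g a by rewrite (inj_eq (@perm_inj _ _)) eq_sym.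
rewrite (bigD1 ((w^-1)%g a)) //= (bigD1 ((w^-1)%g b)) //=.
rewrite big1 ?addr0; last first.
  move=> j /andP[ja jb]; rewrite permM tpermD ?subrr ?mulr0 //.
    by apply: contra ja => /eqP ->; rewrite permK.
  by apply: contra jb => /eqP ->; rewrite permK.
rewrite !permM !permKV tpermL tpermR -!natr1; ring.
Qed.

Lemma chain (R : realFieldType) n (J : {set 'I_n}) (w : 'S_n) (f : 'I_n -> R)
    (G : Prop) :
  (forall a b : 'I_n, (a < b)%N ->
     (forall v : 'I_n, (a < v < b)%N -> w v = v) ->
     ~ (w a = a /\ a \notin J) -> ~ (w b = b /\ b \in J) -> f a < f b \/ G) ->
  forall a b : 'I_n, (a < b)%N ->
     ~ (w a = a /\ a \notin J) -> ~ (w b = b /\ b \in J) -> f a < f b \/ G.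
Proof.
move=> hlink a b; move: {2}(b - a)%N (leqnn (b - a)%N) => k.
elim: k a b => [|k IH] a b hk ab ha hb; first by lia.
case: (pickP (fun v : 'I_n => (a < v < b)%N && (w v != v))) => [v|none].
  move=> /andP[/andP[av vb] wv].
  have hv1 : ~ (w v = v /\ v \notin J) by move=> [/eqP]; rewrite (negbTE wv).
  have hv2 : ~ (w v = v /\ v \in J) by move=> [/eqP]; rewrite (negbTE wv).
  have := IH a v ltac:(lia) av ha hv2.
  have := IH v b ltac:(lia) vb hv1 hb.
  case=> [h2|g]; last by right.
  case=> [h1|g]; last by right.
  by left; apply: lt_trans h2.
apply: hlink => // v hv; have := none v; rewrite hv /=.
by move/negbFE/eqP.
Qed.

Lemma link (R : realFieldType) n (J : {set 'I_n}) (p q w : 'S_n)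
    (c : 'I_n -> R) (m : R) :
  S_J J w -> lin_eval c (perm_point R w) = m ->
  (forall w', S_J J w' -> w' <> p -> w' <> q ->
     lin_eval c (perm_point R w') < m) ->
  forall a b : 'I_n, (a < b)%N ->
     (forall v : 'I_n, (a < v < b)%N -> w v = v) ->
     ~ (w a = a /\ a \notin J) -> ~ (w b = b /\ b \in J) ->
  c ((w^-1)%g a) < c ((w^-1)%g b) \/
  ((w * tperm a b)%g = p \/ (w * tperm a b)%g = q).
Proof.
move=> hw hm hlt a b ab hmid ha hb.
have hs := swap_SJ hw ab hmid ha hb.
case: (eqVneq (w * tperm a b)%g p) => [->|np]; first by right; left.
case: (eqVneq (w * tperm a b)%g q) => [->|nq]; first by right; right.
left.
have np' : (w * tperm a b)%g <> p by move/eqP; rewrite (negbTE np).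
have nq' : (w * tperm a b)%g <> q by move/eqP; rewrite (negbTE nq).
have h := hlt _ hs np' nq'.
have anb : a != b by apply/eqP => e; rewrite e ltnn in ab.
have e := lin_swap c w anb.
have hba : (a : nat)%:R < (b : nat)%:R :> R by rewrite ltr_nat.
rewrite -subr_lt0.
have : (c ((w^-1)%g a) - c ((w^-1)%g b)) * ((b : nat)%:R - (a : nat)%:R) < 0.
  by rewrite -e hm subr_lt0.
by rewrite pmulr_llt0 // subr_gt0.
Qed.

Lemma pt_inj (R : realFieldType) n (w w' : 'S_n) :
  perm_point R w = perm_point R w' -> w = w'.
Proof.
move=> e; apply/permP => j; have := congr1 (fun f => f j) e.
by rewrite /perm_point => /eqP; rewrite eqr_nat eqSS => /eqP /val_inj.
Qed.

Lemma forward (R : realFieldType) n (J : {set 'I_n}) (p q : 'S_n) :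
  S_J J p -> S_J J q -> bridge_edge R J p q ->
  exists i l : 'I_n,
     (val i < val l)%N /\
     (forall x : 'I_n, q x = tperm i l (p x)) /\
     (forall j : 'I_n, (val i < val j < val l)%N -> p j = j /\ q j = j).
Proof.
move=> hp hq [_ _ hpq [c hc]].
set G := exists i l : 'I_n, _.
set m := lin_eval c (perm_point R p).
have hqm : lin_eval c (perm_point R q) = m by apply/(hc q hq).2; right.
have hlt : forall w', S_J J w' -> w' <> p -> w' <> q ->
    lin_eval c (perm_point R w') < m.
  move=> w' hw' np nq; have [hle hiff] := hc w' hw'.
  rewrite lt_neqAle hle andbT; apply/eqP => e.
  by have [/pt_inj|/pt_inj] := hiff.1 e.
have Gp : forall a b : 'I_n, (a < b)%N ->
    (forall v : 'I_n, (a < v < b)%N -> p v = v) ->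
    ((p * tperm a b)%g = p \/ (p * tperm a b)%g = q) -> G.
  move=> a b ab hmid [e|e].
    have := congr1 (fun s : 'S_n => s ((p^-1)%g a)) e.
    by rewrite /= permM permKV tpermL => e'; rewrite e' ltnn in ab.
  exists a, b; split => //; split.
    by move=> x; rewrite -e permM.
  move=> j hj; have pj := hmid j hj; split => //.
  rewrite -e permM pj tpermD //; apply/eqP => e'; subst j; move: hj; lia.
have Gq : forall a b : 'I_n, (a < b)%N ->
    (forall v : 'I_n, (a < v < b)%N -> q v = v) ->
    ((q * tperm a b)%g = p \/ (q * tperm a b)%g = q) -> G.
  move=> a b ab hmid [e|e]; last first.
    have := congr1 (fun s : 'S_n => s ((q^-1)%g a)) e.
    by rewrite /= permM permKV tpermL => e'; rewrite e' ltnn in ab.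
  exists a, b; split => //; split.
    by move=> x; rewrite -e permM tpermK.
  move=> j hj; have qj := hmid j hj; split => //.
  rewrite -e permM qj tpermD //; apply/eqP => e'; subst j; move: hj; lia.
have [x0 hx0] : exists x0, p x0 != q x0.
  case: (pickP (fun x => p x != q x)) => [x0 hx0|none]; first by exists x0.
  exfalso; apply: hpq; congr perm_point; apply/permP => x.
  by apply/eqP; have := none x => /negbFE.
case: (@arg_minnP _ x0 (fun x => p x != q x) (fun x => nat_of_ord (p x)) hx0).
move=> x hx hmin.
have pxq : (p x < q x)%N.
  case: (ltngtP (p x) (q x)) => // [qp|e]; last first.
    by move: hx; rewrite (val_inj e) eqxx.
  exfalso.
  set k := (p^-1)%g (q x).
  have pk : p k = q x by rewrite permKV.
  have hk : p k != q k.
    apply/eqP => e; have kx : k = x by apply: (@perm_inj _ q); rewrite -e.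
    have pxqx : p x = q x by rewrite -{1}kx pk.
    by move: hx; rewrite pxqx eqxx.
  by have := hmin k hk; rewrite pk; lia.
set y := (q^-1)%g (p x).
have qy : q y = p x by rewrite permKV.
have hy : p y != q y.
  apply/eqP => e; have yx : y = x by apply: (@perm_inj _ p); rewrite e.
  by move: hx; rewrite -yx e qy eqxx.
have yx : y != x.
  apply/eqP => e; have qxpx : q x = p x by rewrite -{1}e qy.
  by move: hx; rewrite qxpx eqxx.
have pxy : (p x < p y)%N.
  have := hmin y hy; rewrite leq_eqVlt => /orP[/eqP e|//].
  by move: yx; rewrite -(inj_eq (@perm_inj _ p)) -val_eqE /= e eqxx.
have hlinkp := link hp (erefl m) hlt.
have hlinkq := link hq hqm hlt.
have cp := chain (f := fun v => c ((p^-1)%g v)) (G := G) (w := p) (J := J)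
  ltac:(move=> a b ab hmid ha hb;
        case: (hlinkp a b ab hmid ha hb) => [h|e]; [by left | right; exact: Gp a b ab hmid e]).
have cq := chain (f := fun v => c ((q^-1)%g v)) (G := G) (w := q) (J := J)
  ltac:(move=> a b ab hmid ha hb;
        case: (hlinkq a b ab hmid ha hb) => [h|e]; [by left | right; exact: Gq a b ab hmid e]).
have h1 : c x < c y \/ G.
  have := cp (p x) (p y) pxy; rewrite /= !permK; apply.
  move=> [e nJ]; have ex : p x = x by apply: (@perm_inj _ p).
  rewrite ex in nJ; have := SJ_D hq nJ; move: pxq; rewrite ex; lia.
  move=> [e yJ]; have ey : p y = y by apply: (@perm_inj _ p).
  rewrite ey in yJ; have := SJ_U hq yJ; rewrite qy; move: pxy; rewrite ey; lia.
have h2 : c y < c x \/ G.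
  have := cq (q y) (q x) ltac:(rewrite qy //); rewrite /= !permK; apply.
  move=> [e nJ]; have ey : q y = y by apply: (@perm_inj _ q).
  rewrite ey in nJ; have := SJ_D hp nJ; move: pxy; rewrite -qy ey; lia.
  move=> [e xJ]; have ex : q x = x by apply: (@perm_inj _ q).
  rewrite ex in xJ; have := SJ_U hp xJ; move: pxq; rewrite ex; lia.
case: h1 => [h1|//]; case: h2 => [h2|//].
by exfalso; move: (lt_trans h1 h2); rewrite ltxx.
Qed.

Lemma term_lb (R : realFieldType) (a b c : R) : - (c - b) ^+ 2 <= (a - b) * (a - c).
Proof.
have h1 := sqr_ge0 (2 * (a - b) - (c - b)); have h2 := sqr_ge0 (c - b).
rewrite -subr_ge0 opprK.
have e : ((a - b) * (a - c) + (c - b) ^+ 2) * 4 = (2 * (a - b) - (c - b)) ^+ 2 + 3 * (c - b) ^+ 2 by ring.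
have : 0 <= ((a - b) * (a - c) + (c - b) ^+ 2) * 4 by rewrite e; lra.
lra.
Qed.

Lemma term_nonneg (R : realFieldType) (a b c : nat) :
  ((a <= b) && (a <= c))%N || ((b <= a) && (c <= a))%N ->
  0 <= (a%:R - b%:R) * (a%:R - c%:R) :> R.
Proof.
case/orP => /andP[h1 h2].
  by apply: mulr_le0; rewrite subr_le0 ler_nat.
by apply: mulr_ge0; rewrite subr_ge0 ler_nat.
Qed.

Lemma natS_diff (R : realFieldType) (a b : nat) :
  (a.+1%:R - b.+1%:R : R) = a%:R - b%:R.
Proof. rewrite -!natr1; ring. Qed.

Lemma both_eq n (p q w : 'S_n) (i l : 'I_n) :
  (forall x, q x = tperm i l (p x)) ->
  (forall j, w j = p j \/ w j = q j) -> w = p \/ w = q.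
Proof.
move=> hq hw.
have hmv : forall j, p j != q j -> (p j = i /\ q j = l) \/ (p j = l /\ q j = i).
  move=> j; rewrite hq; case: tpermP => [->|->|_ _]; try by [left|right].
  by rewrite eqxx.
case: (eqVneq w p) => [->|wp]; first by left.
right; have [j0 hj0] : exists j0, w j0 != p j0.
  case: (pickP (fun j => w j != p j)) => [j0 h|none]; first by exists j0.
  have wpe : w = p by apply/permP => j; apply/eqP; have := none j => /negbFE.
  by rewrite wpe eqxx in wp.
have wq0 : w j0 = q j0 by case: (hw j0) => // e; rewrite e eqxx in hj0.
have m0 : p j0 != q j0 by rewrite -wq0 eq_sym.
apply/permP => j; case: (hw j) => // wpj.
case: (eqVneq (p j) (q j)) => [e|mj]; first by rewrite wpj e.
exfalso.
have jj0 : j != j0 by apply: contraNneq hj0 => <-; rewrite wpj.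
have : p j = p j0 \/ w j = w j0.
  rewrite wpj wq0.
  by case: (hmv j mj) => -[-> _]; case: (hmv j0 m0) => -[-> ->]; auto.
case=> [/perm_inj|/perm_inj] e; by rewrite e eqxx in jj0.
Qed.

Lemma backward (R : realFieldType) n (J : {set 'I_n}) (p q : 'S_n) (i l : 'I_n) :
  S_J J p -> S_J J q -> (i < l)%N ->
  (forall x, q x = tperm i l (p x)) ->
  (forall j : 'I_n, (i < j < l)%N -> p j = j /\ q j = j) ->
  bridge_edge R J p q.
Proof.
move=> hp hq il hqx hfix.
pose P := perm_point R p; pose Q := perm_point R q.
pose M : R := \sum_j (Q j - P j) ^+ 2 + 1.
pose g := fun j : 'I_n => if (i < j < l)%N then (if j \in J then 1 else -1) else 0 : R.
pose c := fun j => P j + Q j - M * g j.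
pose T1 := fun w : 'S_n => \sum_j (perm_point R w j - P j) * (perm_point R w j - Q j).
pose T2 := fun w : 'S_n => \sum_j g j * (perm_point R w j - P j).
have sq : forall w : 'S_n, \sum_j (perm_point R w j) ^+ 2 = \sum_(j : 'I_n) ((j : nat).+1%:R) ^+ 2 :> R.
  by move=> w; rewrite /perm_point [RHS](reindex_inj (@perm_inj _ w)).
have key : forall w : 'S_n,
    lin_eval c P - lin_eval c (perm_point R w) = T1 w + M * T2 w.
  move=> w; rewrite /T1 /T2 mulr_sumr -big_split /= /lin_eval -sumrB.
  apply/eqP; rewrite -subr_eq0 -sumrB.
  set W := perm_point R w.
  have -> : \sum_j (c j * P j - c j * W j -
      ((W j - P j) * (W j - Q j) + M * (g j * (W j - P j)))) =
      \sum_j (P j ^+ 2 - W j ^+ 2).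
    by apply: eq_bigr => j _; rewrite /c; ring.
  by rewrite sumrB /W /P sq sq subrr.
have M1 : 1 <= M.
  rewrite /M lerDr; apply: sumr_ge0 => j _; exact: sqr_ge0.
have T2j : forall w, S_J J w -> forall j, 0 <= g j * (perm_point R w j - P j).
  move=> w hw j; rewrite /g; case: ifP => hj; last by rewrite mul0r.
  rewrite /P /perm_point (hfix j hj).1; case: ifP => jJ.
    by rewrite mul1r subr_ge0 ler_nat ltnS; exact: (SJ_U hw jJ).
  by rewrite mulN1r oppr_ge0 subr_le0 ler_nat ltnS; exact: (SJ_D hw (negbT jJ)).
have T2pos : forall w, S_J J w -> forall j : 'I_n, (i < j < l)%N -> w j != j ->
    1 <= g j * (perm_point R w j - P j).
  move=> w hw j hj wj; rewrite /g hj /P /perm_point (hfix j hj).1.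
  have wjn : (w j : nat) != j by [].
  case: ifP => jJ.
    have h := SJ_U hw jJ.
    have : ((j : nat).+2%:R <= (w j : nat).+1%:R :> R) by rewrite ler_nat; lia.
    rewrite -[(j : nat).+2%:R]natr1; lra.
  have h := SJ_D hw (negbT jJ).
  have : ((w j : nat).+2%:R <= (j : nat).+1%:R :> R) by rewrite ler_nat; lia.
  rewrite -[(w j : nat).+2%:R]natr1; lra.
have T1lb : forall w : 'S_n, - (M - 1) <= T1 w.
  move=> w; rewrite /M addrK -sumrN; apply: ler_sum => j _; exact: term_lb.
have hmv : forall j, p j != q j -> (p j = i /\ q j = l) \/ (p j = l /\ q j = i).
  move=> j; rewrite hqx; case: tpermP => [->|->|_ _]; try by [left|right].
  by rewrite eqxx.
have T1j : forall w : 'S_n, (forall j : 'I_n, (i < j < l)%N -> w j = j) ->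
    forall j, 0 <= (perm_point R w j - P j) * (perm_point R w j - Q j).
  move=> w hw j; rewrite /P /Q /perm_point; apply: term_nonneg.
  case: (eqVneq (p j) (q j)) => [e|mj].
    by rewrite e !ltnS; case: (leqP (w j) (q j)) => h; rewrite ?h //= ltnW ?orbT.
  have hout : (w j <= i)%N || (l <= w j)%N.
    case: (leqP (w j) i) => //= h1; case: (leqP l (w j)) => //= h2; exfalso.
    have := hw (w j) ltac:(by rewrite h1 h2) => /perm_inj e.
    have := hfix j ltac:(by rewrite -e h1 h2) => -[pj qj].
    by move: mj; rewrite pj qj eqxx.
  by case: (hmv j mj) => -[-> ->]; rewrite !ltnS /=; move: hout il; lia.
have T2z : forall w : 'S_n, (forall j : 'I_n, (i < j < l)%N -> w j = j) -> T2 w = 0.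
  move=> w hw; apply: big1 => j _; rewrite /g; case: ifP => hj; last by rewrite mul0r.
  by rewrite /P /perm_point (hfix j hj).1 hw // subrr mulr0.
have qfix : forall j : 'I_n, (i < j < l)%N -> q j = j by move=> j hj; exact: (hfix j hj).2.
have T1q : T1 q = 0 by apply: big1 => j _; rewrite subrr mulr0.
split => //.
  move=> e; have epq := pt_inj e.
  have := hqx ((p^-1)%g i); rewrite permKV tpermL -epq permKV => e'.
  by move: il; rewrite -e' ltnn.
exists c => w hw.
have K := key w.
case: (boolP [forall j : 'I_n, (i < j < l)%N ==> (w j == j)]) => hfw.
  have hw' : forall j : 'I_n, (i < j < l)%N -> w j = j.
    by move=> j hj; apply/eqP; move/forallP/(_ j): hfw; rewrite hj.
  have T1ge : 0 <= T1 w by apply: sumr_ge0 => j _; exact: T1j.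
  rewrite T2z // mulr0 addr0 in K.
  split; first by rewrite -subr_ge0 K.
  split.
    move=> e; have T10 : T1 w = 0 by rewrite -K e subrr.
    have hz := psumr_eq0P (fun j _ => T1j w hw' j) T10.
    suff : w = p \/ w = q by case=> ->; [left|right].
    apply: (both_eq hqx) => j; have := hz j isT; move/eqP; rewrite mulf_eq0.
    rewrite /P /Q /perm_point !subr_eq0 !eqr_nat !eqSS.
    by case/orP => /eqP/val_inj ->; [left|right].
  case=> e; first by rewrite e.
  rewrite (pt_inj e); apply/eqP; rewrite eq_sym -subr_eq0.
  by rewrite (key q) T1q T2z // mulr0 addr0.
have [j0 hj0] : exists j0 : 'I_n, ~~ ((i < j0 < l)%N ==> (w j0 == j0)).
  by apply/existsP; rewrite -negb_forall.
move: hj0; rewrite negb_imply => /andP[hj0 wj0].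
have T2ge : 1 <= T2 w.
  rewrite /T2 (bigD1 j0) //= -[1]addr0; apply: lerD; first exact: T2pos.
  by apply: sumr_ge0 => j _; exact: T2j.
have hMT : M <= M * T2 w.
  by rewrite -{1}[M]mulr1; apply: ler_wpM2l => //; lra.
have T1l := T1lb w.
have pos : 0 < lin_eval c P - lin_eval c (perm_point R w) by rewrite K; lra.
split; first by lra.
split.
  by move=> e; move: pos; rewrite e subrr ltxx.
case=> /pt_inj e; exfalso; move: wj0; rewrite e.
  by rewrite (hfix j0 hj0).1 eqxx.
by rewrite qfix // eqxx.
Qed.

Local Close Scope ring_scope.

Theorem theorem3p4 (R : realFieldType) (n k : nat) (J : {set 'I_n})
    (pi pih : 'S_n) :
  (0 < n)%N -> #|J| = k -> pi \in S_J J -> pih \in S_J J ->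
  (bridge_edge R J pi pih <->
   exists i l : 'I_n,
     (val i < val l)%N /\
     (forall x : 'I_n, pih x = tperm i l (pi x)) /\
     (forall j : 'I_n, (val i < val j < val l)%N -> pi j = j /\ pih j = j)).
Proof.
move=> _ _ hp hq.
have hp' : S_J J pi := hp.
have hq' : S_J J pih := hq.
split; first exact: (forward hp' hq').
by case=> i [l [il [hx hj]]]; exact: (backward R hp' hq' il hx hj).
Qed.
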